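(* Let $n\ge 3$. For every point $x\in Gr^{>0}(2,n)$ one has $E(x)\ge E([C])=\dfrac{\sin(\lfloor n/2\rfloor\pi/n)}{\sin(\pi/n)}$. In particular, the row span $[C]$ of the cyclic matrix $C$ (which lies in $Gr^{>0}(2,n)$) minimizes $E$ on $Gr^{>0}(2,n)$.
   Context: For a real $2\times n$ matrix $X$ and $1\le i<j\le n$, let $\Delta_{i,j}(X)$ denote the determinant of the $2\times 2$ submatrix formed by columns $i$ and $j$ of $X$ (the Plücker coordinates of the row span $[X]$; they are determined by $[X]$ up to a common nonzero scalar). $Gr(2,n)$ is the Grassmannian of 2-dimensional subspaces of $\mathbb{R}^n$; the positive Grassmannian $Gr^{>0}(2,n)$ is the set of $x\in Gr(2,n)$ having a spanning $2\times n$ matrix $X$ (rows spanning $x$) with $\Delta_{i,j}(X)>0$ for all $1\le i<j\le n$. The loss function is $E(x)=\max_{i<j}\Delta_{i,j}(X)/\min_{i<j}\Delta_{i,j}(X)$, which does not depend on the choice of such $X$. The cyclic matrix $C$ is the $2\times n$ matrix whose $m$-th column is $(\cos((m-1)\pi/n),\ \sin((m-1)\pi/n))^T$ for $m=1,\dots,n$. *)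

(* Defs.v *)
From HB Require Import structures.
From mathcomp Require Import all_boot all_order all_algebra.
From mathcomp Require Import reals trigo.
Set Implicit Arguments. Unset Strict Implicit. Unset Printing Implicit Defensive.
Import Order.TTheory GRing.Theory Num.Theory.
Local Open Scope ring_scope.

Section Grassmann.
Variable R : realType.

Definition plucker (n : nat) (X : 'M[R]_(2, n)) (i j : 'I_n) : R :=
  X ord0 i * X ord_max j - X ord0 j * X ord_max i.

Definition pluckers (n : nat) (X : 'M[R]_(2, n)) : seq R :=
  [seq plucker X ij.1 ij.2 | ij : 'I_n * 'I_n <- [seq (i, j) | i <- enum 'I_n, j <- enum 'I_n]
     & ij.1 < ij.2]%N.

Definition max_plucker (n : nat) (X : 'M[R]_(2, n)) : R :=
  \big[Num.max/head 0 (pluckers X)]_(d <- pluckers X) d.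

Definition min_plucker (n : nat) (X : 'M[R]_(2, n)) : R :=
  \big[Num.min/head 0 (pluckers X)]_(d <- pluckers X) d.

(* X spans a point of the positive Grassmannian Gr^{>0}(2,n) *)
Definition totally_positive (n : nat) (X : 'M[R]_(2, n)) : Prop :=
  forall i j : 'I_n, (i < j)%N -> 0 < plucker X i j.

Definition lossE (n : nat) (X : 'M[R]_(2, n)) : R :=
  max_plucker X / min_plucker X.

Definition cyclicC (n : nat) : 'M[R]_(2, n) :=
  \matrix_(i < 2, m < n)
    (if i == ord0 then cos (m%:R * pi / n%:R) else sin (m%:R * pi / n%:R)).

End Grassmann.

(* Main.v *)
Require Import Defs.
From HB Require Import structures.
From mathcomp Require Import all_boot all_order all_algebra.
From mathcomp Require Import reals trigo exp.
From mathcomp Require Import lra zify ring.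
Import Order.TTheory GRing.Theory Num.Theory.
Local Open Scope ring_scope.



Section GM.
Variable R : realType.
Definition rt (n : nat) (t : R) := t `^ (n%:R^-1).
Lemma rtK n t : (0 < n)%N -> 0 <= t -> rt n t ^+ n = t.
Proof.
move=> n0 t0; rewrite /rt -powR_mulrn ?powR_ge0 // -powRrM mulVf ?powRr1 //.
by rewrite pnatr_eq0 -lt0n.
Qed.
Lemma rt_ge0 n t : 0 <= rt n t. Proof. exact: powR_ge0. Qed.

Lemma AGM n (z : 'I_n -> R) : (0 < n)%N -> (forall i, 0 <= z i) ->
  \prod_i z i <= ((\sum_i z i) / n%:R) ^+ n.
Proof.
move=> n0 z0.
have := @leif_AGM R _ predT z (fun i _ => z0 i).
rewrite card_ord => /leif_le; exact.
Qed.

Lemma gm_super n (x y : 'I_n -> R) (X Y : R) : (0 < n)%N ->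
  (forall i, 0 <= x i) -> (forall i, 0 < y i) -> 0 <= X -> 0 <= Y ->
  X ^+ n <= \prod_i x i -> Y ^+ n <= \prod_i y i ->
  (X + Y) ^+ n <= \prod_i (x i + y i).
Proof.
move=> n0 x0 y0 X0 Y0 hX hY.
have s0 i : 0 < x i + y i by rewrite ltr_wpDl.
set Q := \prod_i (x i + y i).
have Q0 : 0 < Q by apply: prodr_gt0 => i _.
set q := rt n Q.
have qK : q ^+ n = Q by rewrite rtK // ltW.
have q0 : 0 <= q := rt_ge0 _ _.
pose a := (\sum_i (x i / (x i + y i))) / n%:R.
pose b := (\sum_i (y i / (x i + y i))) / n%:R.
have ab : a + b = 1.
  rewrite /a /b -mulrDl -big_split /=.
  rewrite (eq_bigr (fun=> 1)) => [|i _]; last by rewrite -mulrDl divff // gt_eqF.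
  by rewrite sumr_const card_ord divff // pnatr_eq0 -lt0n.
have a0 : 0 <= a by rewrite divr_ge0 // sumr_ge0 // => i _; rewrite divr_ge0 // ltW.
have b0 : 0 <= b by rewrite divr_ge0 // sumr_ge0 // => i _; rewrite divr_ge0 // ltW.
have key (u : 'I_n -> R) (U c : R) : (forall i, 0 <= u i) -> 0 <= U -> 0 <= c ->
   U ^+ n <= \prod_i u i -> c = (\sum_i (u i / (x i + y i))) / n%:R -> U <= c * q.
  move=> u0 U0 c0 hU hc.
  rewrite -(ler_pXn2r n0) ?nnegrE ?mulr_ge0 //.
  apply: (le_trans hU); rewrite exprMn qK.
  have -> : \prod_i u i = (\prod_i (u i / (x i + y i))) * Q.
    rewrite /Q -big_split /=; apply: eq_bigr => i _; rewrite divfK // gt_eqF //.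
  by rewrite ler_pM2r // hc; apply: AGM n0 _ => i; rewrite divr_ge0 // ltW.
have hx := key x X a x0 X0 a0 hX erefl.
have hy := key y Y b (fun i => ltW (y0 i)) Y0 b0 hY erefl.
rewrite -qK ler_pXn2r ?nnegrE ?addr_ge0 //.
by rewrite -[q]mul1r -ab mulrDl lerD.
Qed.
End GM.



Section Seq.
Variable R : realType.

Lemma ex_minimizer (f : nat -> R) N : exists2 k, (k <= N)%N & forall j, (j <= N)%N -> f k <= f j.
Proof.
elim: N => [|N [k kN hk]]; first by exists 0%N => // j; rewrite leqn0 => /eqP ->.
have [le|lt] := leP (f k) (f N.+1).
  exists k; first by rewrite (leq_trans kN).
  by move=> j; rewrite leq_eqVlt ltnS => /orP[/eqP ->|/hk].
exists N.+1 => // j; rewrite leq_eqVlt ltnS => /orP[/eqP ->//|/hk].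
by apply: le_trans; apply: ltW.
Qed.

Lemma min_principle n (g s : nat -> R) : (2 <= n)%N ->
  g 0 = 0 -> g n = 0 -> s 0 = 0 -> s n = 0 ->
  (forall k, (0 < k < n)%N -> 0 < s k) ->
  (forall k, (0 < k < n)%N -> 0 <= g k) ->
  (forall k, (0 < k < n)%N -> s k ^+ 2 = s k.-1 * s k.+1 + 1) ->
  (forall k, (0 < k < n)%N -> g k.-1 * g k.+1 + g 1 ^+ 2 <= g k ^+ 2) ->
  forall k, (0 < k < n)%N -> s k * g 1 <= g k.
Proof.
move=> n2 g0 gn s0 sn spos gpos srec grec.
have [k0 k0N hk0] := ex_minimizer (fun j => g j.+1 / s j.+1) (n - 2).
set t := g k0.+1 / s k0.+1.
have r0 : (0 < k0.+1 < n)%N by apply/andP; split => //; lia.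
have t0 : 0 <= t by rewrite divr_ge0 ?gpos // ltW ?spos.
have ht j : (j <= n)%N -> t * s j <= g j /\ 0 <= t * s j.
  move=> jn; case: j jn => [|j] jn; first by rewrite s0 g0 mulr0.
  have [/eqP ej|nj] := boolP (j.+1 == n); first by rewrite ej sn gn mulr0.
  have rj : (0 < j.+1 < n)%N by apply/andP; split => //; lia.
  have sj := spos _ rj.
  split; last by rewrite mulr_ge0 // ltW.
  rewrite -ler_pdivlMr // hk0 //; lia.
have gk : g k0.+1 = t * s k0.+1 by rewrite /t divfK // gt_eqF // spos.
have [h1 h1'] := ht k0 ltac:(lia).
have [h2 h2'] := ht k0.+2 ltac:(lia).
have hp : (t * s k0) * (t * s k0.+2) <= g k0 * g k0.+2 by apply: ler_pM.
have := grec _ r0; have := srec _ r0; rewrite /= gk => e.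
rewrite exprMn e => hg.
have g10 : 0 <= g 1 by apply: gpos.
have tg : g 1 <= t.
  rewrite -(ler_pXn2r (isT : (0 < 2)%N)) ?nnegrE //.
  have : t ^+ 2 * (s k0 * s k0.+2) <= g k0 * g k0.+2 by rewrite mulrACA -expr2 in hp.
  move=> hp'; lra.
move=> k kr; have [hk _] := ht k ltac:(lia).
apply: le_trans hk; rewrite mulrC ler_wpM2r // ltW ?spos //.
Qed.
End Seq.



Section Lst.
Variable R : realType.

Lemma bigmax_ge (s : seq R) h d : d \in s -> d <= \big[Num.max/h]_(e <- s) e.
Proof.
elim: s => // e s IH; rewrite inE big_cons => /orP[/eqP ->|/IH]; first by rewrite le_max lexx.
by move=> H; rewrite le_max H orbT.
Qed.
Lemma bigmax_le (s : seq R) h c : h <= c -> (forall d, d \in s -> d <= c) ->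
  \big[Num.max/h]_(e <- s) e <= c.
Proof.
move=> hc; elim: s => [|e s IH] H; first by rewrite big_nil.
rewrite big_cons ge_max H ?mem_head //=; apply: IH => d ds; by apply: H; rewrite inE ds orbT.
Qed.
Lemma bigmin_le (s : seq R) h d : d \in s -> \big[Num.min/h]_(e <- s) e <= d.
Proof.
elim: s => // e s IH; rewrite inE big_cons => /orP[/eqP ->|/IH]; first by rewrite ge_min lexx.
by move=> H; rewrite ge_min H orbT.
Qed.
Lemma bigmin_ge (s : seq R) h c : c <= h -> (forall d, d \in s -> c <= d) ->
  c <= \big[Num.min/h]_(e <- s) e.
Proof.
move=> hc; elim: s => [|e s IH] H; first by rewrite big_nil.
rewrite big_cons le_min H ?mem_head //=; apply: IH => d ds; by apply: H; rewrite inE ds orbT.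
Qed.

Variable n : nat.
Implicit Type X : 'M[R]_(2, n).

Lemma mem_pl X (i j : 'I_n) : (i < j)%N -> plucker X i j \in pluckers X.
Proof.
move=> ij; rewrite /pluckers; apply/mapP; exists (i, j) => //.
rewrite mem_filter /= ij /=; apply/allpairsP; exists (i, j); by rewrite !mem_enum.
Qed.

Lemma pl_mem X d : d \in pluckers X -> exists i j : 'I_n, (i < j)%N /\ d = plucker X i j.
Proof.
by case/mapP => -[i j]; rewrite mem_filter /= => /andP[ij _] ->; exists i, j.
Qed.

Lemma head_mem X : (1 < n)%N -> head 0 (pluckers X) \in pluckers X.
Proof.
move=> n1; have := @mem_pl X (Ordinal (ltnW n1)) (Ordinal n1) isT.
by case: (pluckers X) => // a l _; rewrite mem_head.
Qed.

Lemma max_pl_ge X (i j : 'I_n) : (i < j)%N -> plucker X i j <= max_plucker X.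
Proof. by move=> ij; apply/bigmax_ge/mem_pl. Qed.
Lemma min_pl_le X (i j : 'I_n) : (i < j)%N -> min_plucker X <= plucker X i j.
Proof. by move=> ij; apply/bigmin_le/mem_pl. Qed.
Lemma max_pl_le X c : (1 < n)%N -> (forall i j : 'I_n, (i < j)%N -> plucker X i j <= c) ->
  max_plucker X <= c.
Proof.
move=> n1 H.
have H' d : d \in pluckers X -> d <= c by case/pl_mem => i [j [ij ->]]; apply: H.
by apply: bigmax_le => //; apply/H'/head_mem.
Qed.
Lemma min_pl_ge X c : (1 < n)%N -> (forall i j : 'I_n, (i < j)%N -> c <= plucker X i j) ->
  c <= min_plucker X.
Proof.
move=> n1 H.
have H' d : d \in pluckers X -> c <= d by case/pl_mem => i [j [ij ->]]; apply: H.
by apply: bigmin_ge => //; apply/H'/head_mem.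
Qed.
Lemma bigmin_gt (s : seq R) h c : c < h -> (forall d, d \in s -> c < d) ->
  c < \big[Num.min/h]_(e <- s) e.
Proof.
move=> hc; elim: s => [|e s IH] H; first by rewrite big_nil.
rewrite big_cons lt_min H ?mem_head //=; apply: IH => d ds.
by apply: H; rewrite inE ds orbT.
Qed.
Lemma min_pl_gt X c : (1 < n)%N -> (forall i j : 'I_n, (i < j)%N -> c < plucker X i j) ->
  c < min_plucker X.
Proof.
move=> n1 H.
have H' d : d \in pluckers X -> c < d by case/pl_mem => i [j [ij ->]]; apply: H.
by apply: bigmin_gt => //; apply/H'/head_mem.
Qed.
End Lst.



Lemma prod_rot (R : realType) (f : nat -> R) n : f n = f 0%N ->
  \prod_(a < n) f (a + 1)%N = \prod_(a < n) f a.
Proof.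
case: n => [|n] h; first by rewrite !big_ord0.
rewrite big_ord_recr big_ord_recl /= addn1 h mulrC.
by congr (_ * _); apply: eq_bigr => i _; rewrite addn1.
Qed.

Section Conf.
Variable R : realType.
Variable n : nat.
Hypothesis n0 : (0 < n)%N.
Variable X : 'M[R]_(2, n).

Definition ordm (a : nat) : 'I_n := Ordinal (ltn_pmod a n0).
Definition sg (a : nat) : R := (-1) ^+ (a %/ n).
Definition dt (a b : nat) : R :=
  (sg a * X ord0 (ordm a)) * (sg b * X ord_max (ordm b))
  - (sg b * X ord0 (ordm b)) * (sg a * X ord_max (ordm a)).

Lemma dt_pl a b : dt a b = sg a * sg b * plucker X (ordm a) (ordm b).
Proof. rewrite /dt /plucker; ring. Qed.

Lemma ordmD a : ordm (a + n) = ordm a.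
Proof. by apply: val_inj; rewrite /= modnDr. Qed.

Lemma sgD a : sg (a + n) = - sg a.
Proof.
by rewrite /sg -[X in (a + X)%N]mul1n divnDMl // addn1 exprS mulN1r.
Qed.

Lemma dt_shift a b : dt (a + n) (b + n) = dt a b.
Proof. rewrite !dt_pl !ordmD !sgD; ring. Qed.

Lemma dt_n a : dt a (a + n) = 0.
Proof. rewrite dt_pl ordmD sgD /plucker; ring. Qed.

Lemma dt_0 a : dt a a = 0.
Proof. rewrite dt_pl /plucker; ring. Qed.

Lemma dt_pos a b : (a < b < a + n)%N ->
  exists i j : 'I_n, (i < j)%N /\ dt a b = plucker X i j.
Proof.
move=> /andP[ab ban].
have ea := divn_eq a n; have eb := divn_eq b n.
have ra := ltn_pmod a n0; have rb := ltn_pmod b n0.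
have [e|ne] := eqVneq (b %/ n)%N (a %/ n)%N.
  exists (ordm a), (ordm b); split; first by rewrite /=; nia.
  by rewrite dt_pl /sg e -exprMn mulrNN mulr1 expr1n mul1r.
have e : (b %/ n = (a %/ n).+1)%N by nia.
exists (ordm b), (ordm a); split; first by rewrite /=; nia.
have h : (-1:R) ^+ (a %/ n) * (-1 * (-1) ^+ (a %/ n)) = -1.
  by rewrite mulrCA -exprMn mulrNN mulr1 expr1n mulr1.
rewrite dt_pl /sg e exprS h /plucker; ring.
Qed.


Variables lo hi : R.
Hypothesis lo0 : 0 < lo.
Hypothesis Hpl : forall i j : 'I_n, (i < j)%N -> lo <= plucker X i j <= hi.

Lemma dt_bnd a b : (a < b < a + n)%N -> lo <= dt a b <= hi.
Proof. by case/dt_pos => i [j [ij ->]]; apply: Hpl. Qed.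

Lemma dt_gt0 a b : (a < b < a + n)%N -> 0 < dt a b.
Proof. by move/dt_bnd/andP => [h _]; apply: lt_le_trans h. Qed.

Lemma dt_ge0 a b : (a <= b <= a + n)%N -> 0 <= dt a b.
Proof.
move=> /andP[ab ban].
have [e|ne] := eqVneq b a; first by rewrite e dt_0.
have [e'|ne'] := eqVneq b (a + n)%N; first by rewrite e' dt_n.
apply/ltW/dt_gt0; apply/andP; split; lia.
Qed.

Definition P k := \prod_(a < n) dt a (a + k).

Lemma P_shift j k : \prod_(a < n) dt (a + j) (a + j + k) = P k.
Proof.
elim: j => [|j IH]; first by apply: eq_bigr => a _; rewrite addn0.
rewrite -IH; transitivity (\prod_(a < n) (fun a => dt (a + j) (a + j + k)) (a + 1)%N).
  by apply: eq_bigr => a _; congr dt; lia.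
apply: (@prod_rot R (fun a => dt (a + j) (a + j + k)) n); rewrite /= add0n -[dt j _]dt_shift; congr dt; lia.
Qed.

Lemma P_ge0 k : (k <= n)%N -> 0 <= P k.
Proof. move=> kn; apply: prodr_ge0 => a _; apply: dt_ge0; lia. Qed.

Lemma P_0 : P 0 = 0.
Proof. by rewrite /P (bigD1 (Ordinal n0)) //= addn0 dt_0 mul0r. Qed.

Lemma P_n : P n = 0.
Proof. by rewrite /P (bigD1 (Ordinal n0)) //= dt_n mul0r. Qed.

Lemma P_bnd k : (0 < k < n)%N -> lo ^+ n <= P k <= hi ^+ n.
Proof.
move=> kn.
have -> : lo ^+ n = \prod_(a < n) lo by rewrite prodr_const card_ord.
have -> : hi ^+ n = \prod_(a < n) hi by rewrite prodr_const card_ord.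
apply/andP; split; apply: ler_prod => a _; apply/andP; split.
- exact: ltW.
- by have /andP[] := (@dt_bnd a (a + k) ltac:(lia)).
- by apply: dt_ge0; lia.
- by have /andP[] := (@dt_bnd a (a + k) ltac:(lia)).
Qed.

Lemma P_rec k : (0 < k < n)%N ->
  P k ^+ 2 = \prod_(a < n) (dt a (a + k.+1) * dt a.+1 (a + k)
                              + dt a (a + 1) * dt (a + k) (a + k + 1)).
Proof.
case: k => // k kn.
rewrite expr2 {2}/P -(P_shift 1) /P -big_split /=.
apply: eq_bigr => a _.
have -> : (a + 1 + k.+1 = (a + k.+1) + 1)%N by lia.
have -> : (a + k.+2 = (a + k.+1) + 1)%N by lia.
rewrite addn1 /dt; ring.
Qed.

Lemma P_x k : (0 < k)%N -> \prod_(a < n) (dt a (a + k.+1) * dt a.+1 (a + k)) = P k.+1 * P k.-1.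
Proof.
case: k => // k _; rewrite big_split /= -(P_shift 1 k); congr (_ * _).
by apply: eq_bigr => a _; congr dt; lia.
Qed.

Lemma P_y k : \prod_(a < n) (dt a (a + 1) * dt (a + k) (a + k + 1)) = P 1 * P 1.
Proof. by rewrite big_split /= (P_shift k 1). Qed.


Definition g k := @rt R n (P k).

Lemma gK k : (k <= n)%N -> g k ^+ n = P k.
Proof. by move=> kn; rewrite /g rtK // P_ge0. Qed.

Lemma g0n k : P k = 0 -> g k = 0.
Proof. by move=> h; rewrite /g /rt h powR0 // invr_eq0 pnatr_eq0 -lt0n. Qed.

Lemma grec (n1 : (1 < n)%N) k : (0 < k < n)%N -> g k.-1 * g k.+1 + g 1 ^+ 2 <= g k ^+ 2.
Proof.
move=> kn.
have g_ge0 j : 0 <= g j by apply: rt_ge0.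
rewrite -(ler_pXn2r n0) ?nnegrE ?addr_ge0 ?mulr_ge0 ?exprn_ge0 //.
rewrite -exprM mulnC exprM gK; last lia.
rewrite P_rec //.
apply: (@gm_super R n (fun a : 'I_n => dt a (a + k.+1) * dt a.+1 (a + k))
  (fun a : 'I_n => dt a (a + 1) * dt (a + k) (a + k + 1))) => //.
- move=> a; apply: mulr_ge0; apply: dt_ge0; lia.
- move=> a; apply: mulr_gt0; apply: dt_gt0; lia.
- by rewrite mulr_ge0.
- by rewrite exprn_ge0.
- rewrite P_x; last by case/andP: kn.
  rewrite exprMn mulrC gK; last lia.
  by rewrite gK; last lia.
- by rewrite P_y -exprM mulnC exprM gK // expr2.
Qed.

Lemma key_bound (n1 : (1 < n)%N) (s : nat -> R) m :
  s 0 = 0 -> s n = 0 ->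
  (forall k, (0 < k < n)%N -> 0 < s k) ->
  (forall k, (0 < k < n)%N -> s k ^+ 2 = s k.-1 * s k.+1 + 1) ->
  (0 < m < n)%N -> s m * lo <= hi.
Proof.
move=> s0 sn spos srec mn.
have g_ge0 j : 0 <= g j by apply: rt_ge0.
have := @min_principle R n g s n1 (g0n 0 P_0) (g0n n P_n) s0 sn spos (fun k _ => g_ge0 k)
  srec (grec n1) m mn.
have hi0 : 0 <= hi.
  have /andP[a b] := Hpl (Ordinal (ltnW n1)) (Ordinal n1) isT.
  exact: le_trans (ltW lo0) (le_trans a b).
have hm : g m <= hi.
  rewrite -(ler_pXn2r n0) ?nnegrE // gK; last lia.
  by have /andP[] := P_bnd m mn.
have h1 : lo <= g 1.
  rewrite -(ler_pXn2r n0) ?nnegrE ?(ltW lo0) // gK; last lia.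
  by have /andP[] := P_bnd 1 ltac:(lia).
move=> h; apply: le_trans hm; apply: le_trans h.
by rewrite ler_wpM2l // ltW // spos.
Qed.

End Conf.



Section Trig.
Variable R : realType.
Variable n : nat.
Hypothesis n0 : (0 < n)%N.

Lemma nR0 : 0 < n%:R :> R. Proof. by rewrite ltr0n. Qed.

Definition ang (k : nat) : R := k%:R * pi / n%:R.

Lemma ang_le a b : (a <= b)%N -> ang a <= ang b.
Proof. move=> ab; rewrite /ang ler_pM2r ?invr_gt0 ?nR0 // ler_pM2r ?ler_nat //; exact: pi_gt0. Qed.

Lemma ang_n : ang n = pi.
Proof. rewrite /ang mulrAC divff ?mul1r //; rewrite gt_eqF //; exact: nR0. Qed.

Lemma ang_gt0 k : (0 < k)%N -> 0 < ang k.
Proof. by move=> k0; rewrite /ang divr_gt0 ?mulr_gt0 ?pi_gt0 ?ltr0n. Qed.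

Lemma ang_ltpi k : (k < n)%N -> ang k < pi.
Proof.
move=> kn; rewrite /ang ltr_pdivrMr ?nR0 //.
have : k%:R < n%:R :> R by rewrite ltr_nat.
have := pi_gt0 R; nra.
Qed.

Lemma ang_half k : (k + k <= n)%N -> ang k <= pi / 2.
Proof.
move=> kn; rewrite /ang ler_pdivrMr ?nR0 //.
have : k%:R + k%:R <= n%:R :> R by rewrite -natrD ler_nat.
have := pi_gt0 R; nra.
Qed.

Lemma ang_sym d : (d <= n)%N -> ang (n - d) = pi - ang d.
Proof. by move=> dn; rewrite -ang_n /ang natrB // !mulrBl. Qed.

Lemma sin_ang_pos k : (0 < k < n)%N -> 0 < sin (ang k).
Proof. by case/andP => k0 kn; apply: sin_gt0_pi; rewrite ang_gt0 // ang_ltpi. Qed.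

Lemma sin_piB (x : R) : sin (pi - x) = sin x.
Proof. by rewrite sinB sinpi cospi; ring. Qed.

Lemma sin_le (x y : R) : 0 <= x -> x <= y -> y <= pi / 2 -> sin x <= sin y.
Proof.
move=> x0 xy yp.
have [->|ne] := eqVneq x y; first by [].
have pi0 := pi_gt0 R.
rewrite le_eqVlt; apply/orP; right; rewrite ltr_sin ?in_itv /=.
- by rewrite lt_neqAle ne xy.
- apply/andP; split; [|apply: le_trans yp] => //; lra.
- apply/andP; split => //; lra.
Qed.

Lemma half_facts : (n./2 + n./2 <= n <= n./2 + n./2 + 1)%N.
Proof. have := odd_double_half n; rewrite -addnn; case: (odd n) => /=; lia. Qed.

Lemma sin_bounds d : (0 < d < n)%N ->
  sin (ang 1) <= sin (ang d) <= sin (ang n./2).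
Proof.
move=> dn; have hf := half_facts.
have pi0 := pi_gt0 R.
wlog dm : d dn / (d <= n./2)%N.
  move=> H; have [le|lt] := leqP d n./2; first exact: H.
  have := H (n - d)%N ltac:(lia) ltac:(lia).
  by rewrite ang_sym ?sin_piB //; lia.
apply/andP; split; apply: sin_le.
- exact/ltW/ang_gt0.
- apply: ang_le; lia.
- apply: ang_half; lia.
- apply/ltW/ang_gt0; lia.
- exact: ang_le.
- by apply: ang_half; lia.
Qed.

Definition sq (k : nat) : R := sin (ang k) / sin (ang 1).

Lemma sq0 : sq 0 = 0.
Proof. by rewrite /sq /ang !mul0r sin0 mul0r. Qed.

Lemma sqn : sq n = 0.
Proof. by rewrite /sq ang_n sinpi mul0r. Qed.

Lemma sq_pos k : (1 < n)%N -> (0 < k < n)%N -> 0 < sq k.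
Proof. by move=> n1 kn; rewrite /sq divr_gt0 ?sin_ang_pos //; lia. Qed.

Lemma sq_rec k : (1 < n)%N -> (0 < k < n)%N -> sq k ^+ 2 = sq k.-1 * sq k.+1 + 1.
Proof.
move=> n1; case: k => // k kn.
have s1 : sin (ang 1) != 0 by rewrite gt_eqF // sin_ang_pos //; lia.
rewrite /sq /=; move: s1.
set t := ang 1 => s1.
have ht : forall j, ang j = j%:R * t by move=> j; rewrite /t /ang mul1r mulrA.
rewrite !ht.
set v := k.+1%:R * t.
have e1 : k%:R * t = v - t by rewrite /v -addn1 natrD mulrDl mul1r addrK.
have e2 : k.+2%:R * t = v + t by rewrite /v -(addn1 k.+1) natrD mulrDl mul1r.
rewrite e1 e2.
have key : sin (v - t) * sin (v + t) = sin v ^+ 2 - sin t ^+ 2.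
  rewrite sinB sinD.
  transitivity (sin v ^+ 2 * cos t ^+ 2 - cos v ^+ 2 * sin t ^+ 2); first by ring.
  rewrite !cos2sin2; ring.
rewrite [RHS](_ : _ = (sin (v - t) * sin (v + t) + sin t ^+ 2) / sin t ^+ 2); last by field.
by rewrite key; field.
Qed.

End Trig.



Lemma plC (R : realType) n (i j : 'I_n) : (i < j)%N ->
  plucker (cyclicC R n) i j = sin (ang R n (j - i)).
Proof.
move=> ij; rewrite /plucker !mxE /=.
rewrite /ang natrB ?(ltnW ij) // !mulrBl sinB; ring.
Qed.

Theorem mainTheorem1 (R : realType) (n : nat) (hn : (3 <= n)%N) :
  totally_positive (cyclicC R n) /\
  lossE (cyclicC R n) = sin ((n./2)%:R * pi / n%:R) / sin (pi / n%:R) /\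
  (forall X : 'M[R]_(2, n), totally_positive X -> lossE (cyclicC R n) <= lossE X).
Proof.
have n0 : (0 < n)%N by lia.
have n1 : (1 < n)%N by lia.
have hm : (0 < n./2 < n)%N by have := @half_facts n n0; lia.
set C := cyclicC R n.
have Cb (i j : 'I_n) : (i < j)%N ->
    sin (ang R n 1) <= plucker C i j <= sin (ang R n n./2).
  by move=> ij; rewrite plC //; apply: sin_bounds => //; have := ltn_ord j; lia.
have maxC : max_plucker C = sin (ang R n n./2).
  apply/le_anti/andP; split.
    by apply: max_pl_le => // i j ij; case/andP: (Cb i j ij).
  have m0 : (0 < n./2)%N by case/andP: hm.
  have mn : (n./2 < n)%N by case/andP: hm.
  have := @max_pl_ge R n C (Ordinal n0) (Ordinal mn) m0.
  by rewrite plC /= ?subn0.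
have minC : min_plucker C = sin (ang R n 1).
  apply/le_anti/andP; split; last first.
    by apply: min_pl_ge => // i j ij; case/andP: (Cb i j ij).
  have := @min_pl_le R n C (Ordinal n0) (Ordinal n1) isT.
  by rewrite plC.
have lossC : lossE C = sq R n n./2 by rewrite /lossE maxC minC.
split.
  move=> i j ij; rewrite plC // sin_ang_pos //; have := ltn_ord j; lia.
split.
  by rewrite lossC /sq /ang mul1r.
move=> X hX.
set lo := min_plucker X; set hi := max_plucker X.
have lo0 : 0 < lo by apply: min_pl_gt.
have Hpl (i j : 'I_n) : (i < j)%N -> lo <= plucker X i j <= hi.
  by move=> ij; rewrite min_pl_le // max_pl_ge.
have := @key_bound R n n0 X lo hi lo0 Hpl n1 (sq R n) n./2 (sq0 R n) (@sqn R n n0)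
   (fun k => @sq_pos R n n0 k n1) (fun k => @sq_rec R n n0 k n1) hm.
by rewrite lossC /lossE ler_pdivlMr.
Qed.
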